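(* Consider a radial three-phase distribution grid on buses $\{0,\ldots,N\}$ (feeder bus $0$, each bus $n\geq1$ with parent $\pi_n<n$, line $n$ joining $\pi_n$ and $n$), with symmetric phase impedance matrices $\mathbf{Z}_n=\mathbf{Z}_n^{\top}\in\mathbb{C}^{3\times3}$ having entries $z_n^{ij}=r_n^{ij}+jx_n^{ij}$. Let $\mathbf{X}:=2\mathbf{M}\,\mathrm{bdiag}(\{\mathrm{Im}[\tilde{\mathbf{Z}}_n]\})\mathbf{M}^{\top}$ and $\mathbf{R}:=2\mathbf{M}\,\mathrm{bdiag}(\{\mathrm{Re}[\tilde{\mathbf{Z}}_n]\})\mathbf{M}^{\top}$, and let $\mathbf{X}_x:=2\mathbf{M}\,\mathrm{bdiag}(\{\tilde{\mathbf{X}}_n\})\mathbf{M}^{\top}$, where \[\tilde{\mathbf{X}}_n:=\frac12\begin{bmatrix}2x_n^{11}&-x_n^{12}&-x_n^{13}\\-x_n^{12}&2x_n^{22}&-x_n^{23}\\-x_n^{13}&-x_n^{23}&2x_n^{33}\end{bmatrix}.\] Fix $\mathbf{p}\in\mathbb{R}^{3N}$ and $v_0$, and let $\mathbf{v}(\mathbf{q}):=\mathbf{R}\mathbf{p}+\mathbf{X}\mathbf{q}+v_0\mathbf{1}_{3N}$. Starting from any $\mathbf{q}^0\in\mathbb{R}^{3N}$, consider $\mathbf{q}^{t+1}=\mathbf{q}^t-\mu(\mathbf{v}^t-v_0\mathbf{1}_{3N})$ with $\mathbf{v}^t:=\mathbf{v}(\mathbf{q}^t)$. If $\mu\in\left(0,\frac{2\lambda_{\min}(\mathbf{X}_x)}{\lambda_{\max}(\mathbf{X}^{\top}\mathbf{X})}\right)$,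 then $\mathbf{q}^t$ converges to the minimizer of $\min_{\mathbf{q}\in\mathbb{R}^{3N}}\tfrac12\|\mathbf{R}\mathbf{p}+\mathbf{X}\mathbf{q}\|_2^2$.
   Context: $\tilde{\mathbf{Z}}_n:=\operatorname{diag}(\boldsymbol{\alpha}^* )\mathbf{Z}_n\operatorname{diag}(\boldsymbol{\alpha})$ with $\boldsymbol{\alpha}:=[1~\alpha~\alpha^2]^{\top}$, $\alpha=e^{-j2\pi/3}$; $^*$ is entrywise conjugation, $\mathrm{Re},\mathrm{Im}$ are entrywise. $\mathbf{M}:=\mathbf{T}(\mathbf{I}_3\otimes\mathbf{F})\mathbf{T}^{\top}$, where: the full branch-bus incidence matrix $\tilde{\mathbf{A}}=[\mathbf{a}_0~\mathbf{A}]\in\mathbb{R}^{N\times(N+1)}$ has in row $n$ entry $+1$ at column $\pi_n$, $-1$ at column $n$, zeros elsewhere; $\mathbf{A}$ is the reduced incidence matrix (column of bus $0$ removed); $\mathbf{F}:=-\mathbf{A}^{-1}$; $\mathbf{T}:=[\mathbf{I}_3\otimes\mathbf{e}_1^{\top};\ldots;\mathbf{I}_3\otimes\mathbf{e}_N^{\top}]\in\mathbb{R}^{3N\times3N}$ (blocks stacked vertically) with $\mathbf{e}_n$ the $n$-th column of $\mathbf{I}_N$. $\mathrm{bdiag}(\{\mathbf{Y}_n\})$ is block diagonal with blocks $\mathbf{Y}_1,\ldots,\mathbf{Y}_N$. $\lambda_{\min},\lambda_{\max}$ denote smallest/largest eigenvalues of symmetric matrices. *)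

(* Defs.v *)
From HB Require Import structures.
From mathcomp Require Import all_boot all_order all_algebra.
From mathcomp Require Import all_classical all_reals all_analysis.
From mathcomp Require Import complex mxtens.
Set Implicit Arguments. Unset Strict Implicit. Unset Printing Implicit Defensive.
Import Order.TTheory GRing.Theory Num.Theory.
Import numFieldNormedType.Exports.
Local Open Scope ring_scope.

Section Grid.
Variable R : realType.

Definition alpha : R[i] := (cos (- (2 * pi / 3)) +i* sin (- (2 * pi / 3)))%C.

Definition alphav : 'cV[R[i]]_3 := \col_(k < 3) alpha ^+ k.

Definition conjM m n (A : 'M[R[i]]_(m, n)) : 'M[R[i]]_(m, n) :=
  map_mx (@conjc R) A.
Definition ReM m n (A : 'M[R[i]]_(m, n)) : 'M[R]_(m, n) := map_mx (@complex.Re R) A.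
Definition ImM m n (A : 'M[R[i]]_(m, n)) : 'M[R]_(m, n) := map_mx (@complex.Im R) A.

Definition Ztilde (Zn : 'M[R[i]]_3) : 'M[R[i]]_3 :=
  diag_mx (conjM alphav)^T *m Zn *m diag_mx alphav^T.

Definition Xtilde (Zn : 'M[R[i]]_3) : 'M[R]_3 :=
  (1 / 2) *: \matrix_(i < 3, j < 3)
     (if i == j then 2 * complex.Im (Zn i j) else - complex.Im (Zn i j)).

Variable N : nat.
(* lines are indexed by n : 'I_N; line n joins bus (par n) and bus n.+1
   (buses are 'I_N.+1, bus 0 is the feeder) *)
Variable par : 'I_N -> 'I_N.+1.

(* full branch-bus incidence matrix A~ = [a0 A] *)
Definition Afull : 'M[R]_(N, N.+1) :=
  \matrix_(n < N, k < N.+1) ((k == par n)%:R - (k == lift ord0 n)%:R).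

Definition Ared : 'M[R]_N := col' ord0 Afull.

Definition Fmat : 'M[R]_N := - invmx Ared.

Definition Tblock (n : 'I_N) : 'M[R]_(3 * 1, 3 * N) :=
  tensmx (1%:M : 'M[R]_3) (col n (1%:M : 'M[R]_N))^T.

Lemma sum_blocks_eq (p : nat) : (\sum_(n < N) p = p * N)%N.
Proof. by rewrite sum_nat_const card_ord mulnC. Qed.

Definition Tmat : 'M[R]_(3 * N) :=
  castmx (eq_trans (sum_blocks_eq (3 * 1)%N) (congr1 (muln^~ N) (muln1 3%N)),
          erefl (3 * N)) (\mxcol_(n < N) Tblock n).

Definition bdiag (Y : 'I_N -> 'M[R]_3) : 'M[R]_(3 * N) :=
  castmx (sum_blocks_eq 3%N,
          sum_blocks_eq 3%N) (\mxdiag_(n < N) Y n).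

Definition Mmat : 'M[R]_(3 * N) :=
  Tmat *m castmx (erefl, erefl) (tensmx (1%:M : 'M[R]_3) Fmat) *m Tmat^T.

Variable Z : 'I_N -> 'M[R[i]]_3.

Definition Xmat : 'M[R]_(3 * N) :=
  2 *: (Mmat *m bdiag (fun n => ImM (Ztilde (Z n))) *m Mmat^T).
Definition Rmat : 'M[R]_(3 * N) :=
  2 *: (Mmat *m bdiag (fun n => ReM (Ztilde (Z n))) *m Mmat^T).
Definition Xxmat : 'M[R]_(3 * N) :=
  2 *: (Mmat *m bdiag (fun n => Xtilde (Z n)) *m Mmat^T).

End Grid.

Definition lambda_min (R : realType) n (A : 'M[R]_n) : R :=
  inf [set a : R | eigenvalue A a]%classic.
Definition lambda_max (R : realType) n (A : 'M[R]_n) : R :=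
  sup [set a : R | eigenvalue A a]%classic.

Definition sqnorm2 (R : realType) n (w : 'cV[R]_n) : R := \sum_(i < n) (w i 0) ^+ 2.

(* Main.v *)
Require Import Defs.
From HB Require Import structures.
From mathcomp Require Import all_boot all_order all_algebra.
From mathcomp Require Import all_classical all_reals all_analysis.
From mathcomp Require Import complex mxtens.
From mathcomp Require Import spectral sesquilinear.
From mathcomp Require Import ring lra.
Import Order.TTheory GRing.Theory Num.Theory.
Import numFieldNormedType.Exports.
Local Open Scope ring_scope.
Lemma conjCE (R : realType) (x : R[i]) : x^* = conjc x.
Proof.
have [->|x0] := eqVneq x 0; first by rewrite conjc0 conjC0.
by apply: (mulfI x0); rewrite -normCK sqr_normc.
Qed.

Lemma sym_bounds (R : realType) n (S : 'M[R]_n.+1) : S^T = S ->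
  exists dl du : R, [/\ eigenvalue S dl, eigenvalue S du &
    forall v : 'cV[R]_n.+1, dl * (v^T *m v) 0 0 <= (v^T *m S *m v) 0 0
                           <= du * (v^T *m v) 0 0].
Proof.
move=> Ssym.
pose SC := map_mx (real_complex R) S.
have SCh : SC \is hermsymmx.
  apply: realsym_hermsym.
  - apply/is_hermitianmxP; rewrite expr0 scale1r map_mx_id //.
    idtac.
    by rewrite /SC map_trmx Ssym.
  - by apply/mxOverP => i j; rewrite mxE; apply/complex_realP; exists (S i j).
have /hermitian_normalmx /orthomx_spectralP SCE := SCh.
set P := spectralmx SC in SCE; set d := spectral_diag SC in SCE.
have Pu : P \is unitarymx := spectral_unitarymx SC.
have dr : d \is a realmx := hermitian_spectral_diag_real SCh.
have Pi : invmx P = map_mx Num.conj_op P^T by rewrite invmx_unitary.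
have PtP : map_mx Num.conj_op P^T *m P = 1%:M.
  by rewrite -Pi mulVmx // unitarymx_unit.
have PPt : P *m map_mx Num.conj_op P^T = 1%:M by apply/unitarymxP.
rewrite Pi in SCE.
pose r k := complex.Re (d 0 k).
have dE k : d 0 k = real_complex R (r k) by rewrite /r RRe_real //; exact: (mxOverP dr).
have eig k : eigenvalue S (r k).
  rewrite eigenvalue_root_char -(fmorph_root (real_complex R)) map_char_poly.
  rewrite -eigenvalue_root_char.
  suff H : eigenvalue SC (d 0 k) by move: H; rewrite dE.
  apply/eigenvalueP; exists (row k P).
    rewrite SCE !mulmxA -row_mul PPt -row_mul mul1mx row_diag_mx.
    by rewrite -scalemxAl -rowE.
  apply/negP => /eqP h.
  have := congr1 (row k) PPt; rewrite row_mul h mul0mx => /rowP /(_ k).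
  by rewrite !mxE eqxx /= => /eqP; rewrite eq_sym oner_eq0.
have [k0 _ Hk0] := @arg_minP _ _ _ ord0 xpredT r isT.
have [k1 _ Hk1] := @arg_maxP _ _ _ ord0 xpredT r isT.
exists (r k0), (r k1); split => // v.
pose u := map_mx (real_complex R) v^T.
pose w := u *m map_mx Num.conj_op P^T.
have ut : map_mx Num.conj_op u^T = map_mx (real_complex R) v.
  by apply/matrixP => i j; rewrite !mxE conjCE conjc_real.
have wt : map_mx Num.conj_op w^T = P *m map_mx Num.conj_op u^T.
  by rewrite /w trmx_mul map_mxM trmxCK.
have e1 : real_complex R ((v^T *m S *m v) 0 0) = \sum_k d 0 k * (w 0 k * (w 0 k)^*).
  transitivity ((map_mx (real_complex R) (v^T *m S *m v)) 0 0); first by rewrite [RHS]mxE.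
  rewrite !map_mxM -/SC -/u -ut SCE !mulmxA -/w -(mulmxA _ P) -wt.
  rewrite mul_mx_diag mxE; apply eq_bigr => k _; rewrite !mxE; ring.
have e2 : real_complex R ((v^T *m v) 0 0) = \sum_k w 0 k * (w 0 k)^*.
  transitivity ((map_mx (real_complex R) (v^T *m v)) 0 0); first by rewrite [RHS]mxE.
  rewrite !map_mxM -/u -ut -{1}[u]mulmx1 -PtP !mulmxA -/w -(mulmxA _ P) -wt.
  rewrite mxE; apply eq_bigr => k _; rewrite !mxE; ring.
rewrite -!lecR !rmorphM /= e1 e2 !mulr_sumr; apply/andP; split;
  apply ler_sum => k _; rewrite dE ler_wpM2r ?lecR ?conjCE ?mulcJ_ge0 //.
  exact: Hk0.
exact: Hk1.
Qed.
Lemma cos2pi3 (R : realType) : cos (- (2 * pi / 3)) = - 1 / 2 :> R.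
Proof.
rewrite cosN.
have pi0 : 0 < pi :> R := pi_gt0 R.
have c0 : 0 < cos (pi / 3) :> R.
  by apply: cos_gt0_pihalf; apply/andP; split; lra.
have e1 : cos (2 * pi / 3) = - cos (pi / 3) :> R.
  have -> : 2 * pi / 3 = - (pi / 3) + pi :> R by field.
  by rewrite cosDpi cosN.
have e2 : cos (2 * pi / 3) = cos (pi / 3) ^+ 2 *+ 2 - 1 :> R.
  have -> : 2 * pi / 3 = (pi / 3) *+ 2 :> R by rewrite mulr2n; field.
  by rewrite cos_mulr2n.
have : (2 * cos (pi / 3) - 1) * (cos (pi / 3) + 1) = 0 :> R.
  rewrite e1 in e2; rewrite mulr2n in e2; rewrite -[LHS]/((2 * cos (pi / 3) - 1) * (cos (pi / 3) + 1)).
  nra.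
move/eqP; rewrite mulf_eq0 => /orP [] /eqP h; rewrite e1; lra.
Qed.

Lemma Re_alpha (R : realType) (i j : 'I_3) :
  complex.Re (conjc (alpha R ^+ i) * alpha R ^+ j) = if i == j then 1 else - 1 / 2.
Proof.
have hc := cos2pi3 R.
have hcs := cos2Dsin2 (- (2 * pi / 3)) : _ = 1 :> R.
rewrite /alpha.
move: (cos _) (sin _) hc hcs => c s hc hcs.
rewrite !rmorphXn /=.
case: i => [[|[|[|?]]] ?] //; case: j => [[|[|[|?]]] ?] //=;
  rewrite ?expr0 ?expr1 ?expr2 /=; nra.
Qed.

Lemma Im_pair (R : realType) (u z : R[i]) :
  complex.Im (u * z) + complex.Im (conjc u * z) = 2 * complex.Re u * complex.Im z.
Proof. case: u => a b; case: z => c d /=; ring. Qed.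

Lemma Xt_sym (R : realType) (Zn : 'M[R[i]]_3) : Zn^T = Zn ->
  Defs.ImM (Ztilde Zn) + (Defs.ImM (Ztilde Zn))^T = Xtilde Zn + Xtilde Zn.
Proof.
move=> HZ; apply/matrixP => i j.
have zs : Zn j i = Zn i j by rewrite -{1}HZ mxE.
rewrite /Ztilde mul_mx_diag mul_diag_mx !mxE zs.
rewrite mulrAC [conjc (alpha R ^+ j) * _ * _]mulrAC.
have -> : conjc (alpha R ^+ j) * alpha R ^+ i = conjc (conjc (alpha R ^+ i) * alpha R ^+ j).
  by rewrite rmorphM /= conjcK mulrC.
rewrite Im_pair Re_alpha.
have [->|nij] := eqVneq i j; rewrite ?eqxx /=.
  lra.
lra.
Qed.

Lemma castmxD (R : realType) m n m' n' (e : (m = m') * (n = n')) (A B : 'M[R]_(m, n)) :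
  castmx e (A + B) = castmx e A + castmx e B.
Proof. by apply/matrixP => i j; rewrite !(castmxE, mxE). Qed.

Lemma bdiag_sym (R : realType) N (Y1 Y2 : 'I_N -> 'M[R]_3) :
  (forall n, Y1 n + (Y1 n)^T = Y2 n + Y2 n) ->
  bdiag Y1 + (bdiag Y1)^T = bdiag Y2 + bdiag Y2.
Proof.
move=> H.
have h : \mxdiag_(n < N) Y1 n + \mxdiag_(n < N) (Y1 n)^T = \mxdiag_(n < N) Y2 n + \mxdiag_(n < N) Y2 n.
  by rewrite -!mxdiagD; apply: eq_mxdiag => n; exact: H.
rewrite /bdiag trmx_cast tr_mxdiag /=.
by rewrite -!castmxD h.
Qed.

Lemma sq_tr (R : realType) n (w : 'cV[R]_n) : \tr (w^T *m w) = sqnorm2 w.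
Proof.
rewrite trace_mx11 mxE /sqnorm2; apply: eq_bigr => i _; by rewrite !mxE expr2.
Qed.

Lemma sq_ge0 (R : realType) n (w : 'cV[R]_n) : 0 <= sqnorm2 w.
Proof. by apply: sumr_ge0 => i _; rewrite sqr_ge0. Qed.

Lemma sq_eq0 (R : realType) n (w : 'cV[R]_n) : sqnorm2 w = 0 -> w = 0.
Proof.
move=> h; apply/matrixP => i j; rewrite ord1 mxE.
have := psumr_eq0P (fun i _ => sqr_ge0 (w i 0)) h (i := i) isT.
by move/eqP; rewrite sqrf_eq0 => /eqP.
Qed.

Lemma sq_entry (R : realType) n (w : 'cV[R]_n) i : w i 0 ^+ 2 <= sqnorm2 w.
Proof.
rewrite /sqnorm2 (bigD1 i) //= lerDl; apply: sumr_ge0 => k _; exact: sqr_ge0.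
Qed.

Lemma eig_lb (R : realType) n (S : 'M[R]_n) (dl e : R) :
  (forall v : 'cV[R]_n, dl * (v^T *m v) 0 0 <= (v^T *m S *m v) 0 0) ->
  eigenvalue S e -> dl <= e.
Proof.
move=> H /eigenvalueP [r hr r0].
have := H r^T; rewrite trmxK hr -scalemxAl [X in _ <= X]mxE.
have hp : 0 < (r *m r^T) 0 0.
  rewrite -trace_mx11 -{1}[r]trmxK sq_tr lt_def sq_ge0 andbT.
  by apply/eqP => /sq_eq0 /(congr1 trmx); rewrite trmxK trmx0; apply/eqP.
by rewrite ler_pM2r.
Qed.

Lemma eig_ub (R : realType) n (S : 'M[R]_n) (du e : R) :
  (forall v : 'cV[R]_n, (v^T *m S *m v) 0 0 <= du * (v^T *m v) 0 0) ->
  eigenvalue S e -> e <= du.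
Proof.
move=> H /eigenvalueP [r hr r0].
have := H r^T; rewrite trmxK hr -scalemxAl [X in X <= _]mxE.
have hp : 0 < (r *m r^T) 0 0.
  rewrite -trace_mx11 -{1}[r]trmxK sq_tr lt_def sq_ge0 andbT.
  by apply/eqP => /sq_eq0 /(congr1 trmx); rewrite trmxK trmx0; apply/eqP.
by rewrite ler_pM2r.
Qed.

Lemma lmin_le (R : realType) n (S : 'M[R]_n) (dl : R) :
  (forall v : 'cV[R]_n, dl * (v^T *m v) 0 0 <= (v^T *m S *m v) 0 0) ->
  eigenvalue S dl -> lambda_min S <= dl.
Proof.
move=> H ed; rewrite /lambda_min.
apply: ge_inf => //; exists dl => e /=; exact: eig_lb.
Qed.

Lemma lmax_ge (R : realType) n (S : 'M[R]_n) (du : R) :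
  (forall v : 'cV[R]_n, (v^T *m S *m v) 0 0 <= du * (v^T *m v) 0 0) ->
  eigenvalue S du -> du <= lambda_max S.
Proof.
move=> H ed; rewrite /lambda_max.
apply: ub_le_sup => //; exists du => e /=; exact: eig_ub.
Qed.

Lemma quadX (R : realType) n (X : 'M[R]_n) (v : 'cV[R]_n) :
  (v^T *m (X^T *m X) *m v) 0 0 = sqnorm2 (X *m v).
Proof. by rewrite -trace_mx11 -sq_tr trmx_mul !mulmxA. Qed.

Lemma expand (R : realType) n (X : 'M[R]_n) (v : 'cV[R]_n) (mu : R) :
  sqnorm2 (v - mu *: (X *m v)) = sqnorm2 v
    - mu * ((v^T *m (X + X^T) *m v) 0 0) + mu ^+ 2 * (v^T *m (X^T *m X) *m v) 0 0.
Proof.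
rewrite -!sq_tr -!trace_mx11.
rewrite [(v - _)^T]raddfB /= [(_ *: _)^T]linearZ /= trmx_mul mulmxBl !mulmxBr -!scalemxAl -!scalemxAr.
rewrite !linearB !linearZ /= scalerA mulmxDr mulmxDl linearD /= !mulmxA.
rewrite -!/(GRing.scale _ _) /GRing.scale /=. ring.
Qed.

Lemma main_gen (R : realType) n (X Xx : 'M[R]_n.+1) (b : 'cV[R]_n.+1) (mu : R)
  (q : nat -> 'cV[R]_n.+1) :
  X + X^T = Xx + Xx ->
  (forall t, q t.+1 = q t - mu *: (b + X *m q t)) ->
  0 < mu < 2 * lambda_min Xx / lambda_max (X^T *m X) ->
  exists qstar, b + X *m qstar = 0 /\ (q @ \oo --> qstar)%classic.
Proof.
move=> HX Hq /andP[mu0 hmu].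
have Xxs : Xx^T = Xx.
  apply/matrixP => i j; have := congr1 (fun M : 'M[R]_n.+1 => M i j) HX.
  have := congr1 (fun M : 'M[R]_n.+1 => M j i) HX; rewrite !mxE => h1 h2; lra.
have Ps : (X^T *m X)^T = X^T *m X by rewrite trmx_mul trmxK.
have [dl [du0 [edl _ Hdl]]] := sym_bounds _ _ _ Xxs.
have [dl0 [du [_ edu Hdu]]] := sym_bounds _ _ _ Ps.
have lm : lambda_min Xx <= dl.
  by apply: lmin_le edl => v; case/andP: (Hdl v).
have lM : du <= lambda_max (X^T *m X).
  by apply: lmax_ge edu => v; case/andP: (Hdu v).
have a0 (v : 'cV[R]_n.+1) : 0 <= (v^T *m v) 0 0 by rewrite -trace_mx11 sq_tr sq_ge0.
have Hlo (v : 'cV[R]_n.+1) : lambda_min Xx * (v^T *m v) 0 0 <= (v^T *m Xx *m v) 0 0.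
  apply: le_trans (proj1 (andP (Hdl v))); exact: ler_wpM2r.
have Hup (v : 'cV[R]_n.+1) : sqnorm2 (X *m v) <= lambda_max (X^T *m X) * (v^T *m v) 0 0.
  rewrite -quadX; apply: le_trans (proj2 (andP (Hdu v)) ) _; exact: ler_wpM2r.
pose one : 'cV[R]_n.+1 := const_mx 1.
have one0 : 0 < (one^T *m one) 0 0.
  rewrite lt_def a0 andbT -trace_mx11 sq_tr; apply/eqP => /sq_eq0 /matrixP /(_ 0 0).
  by rewrite !mxE => /eqP; rewrite oner_eq0.
set lmin := lambda_min Xx in hmu Hlo lm.
set lmax := lambda_max (X^T *m X) in hmu Hup lM.
have lmax0 : 0 < lmax.
  have := Hup one; have := sq_ge0 _ _ (X *m one) => h1 h2.
  have : 0 <= lmax by nra.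
  rewrite le_eqVlt => /orP [/eqP h|//].
  by move: hmu; rewrite -h invr0 mulr0 => /(lt_trans mu0); rewrite ltxx.
rewrite ltr_pdivlMr // in hmu.
pose k := 1 - mu * (2 * lmin - mu * lmax).
have contr (v : 'cV[R]_n.+1) : sqnorm2 (v - mu *: (X *m v)) <= k * sqnorm2 v.
  rewrite expand quadX HX.
  have e2 : (v^T *m (Xx + Xx) *m v) 0 0 = 2 * (v^T *m Xx *m v) 0 0.
    by rewrite mulmxDr mulmxDl mxE mulr2n mulrDl mul1r.
  rewrite e2.
  have := Hlo v; have := Hup v; have := a0 v.
  rewrite -[(v^T *m v) 0 0]trace_mx11 sq_tr /k => h1 h2 h3.
  nra.
have k1 : k < 1 by rewrite /k; nra.
have k0 : 0 <= k.
  have := contr one; have := sq_ge0 _ _ (one - mu *: (X *m one)).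
  rewrite -[(one^T *m one) 0 0]trace_mx11 sq_tr in one0 => h1 h2; nra.
have Xu : X \in unitmx.
  rewrite -unitmx_tr -row_free_unit -kermx_eq0; apply/eqP/row_matrixP => i.
  rewrite row0; set r := row i (kermx X^T).
  have hr : r *m X^T = 0 by rewrite /r -row_mul mulmx_ker row0.
  have hv : X *m r^T = 0 by rewrite -{1}[X]trmxK -trmx_mul hr trmx0.
  have := contr r^T; rewrite hv scaler0 subr0 => h.
  have : sqnorm2 r^T = 0.
    have := sq_ge0 _ _ r^T => h0; nra.
  by move/sq_eq0 => /(congr1 trmx); rewrite trmxK trmx0.
pose qs := - (invmx X *m b).
have hqs : b + X *m qs = 0 by rewrite /qs mulmxN mulmxA mulmxV // mul1mx subrr.
exists qs; split => //.
have hb : b = - (X *m qs) by apply/eqP; rewrite -addr_eq0 hqs.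
have he t : q t.+1 - qs = (q t - qs) - mu *: (X *m (q t - qs)).
  rewrite Hq hb mulmxBr [- _ + _]addrC addrAC //.
have hb2 t : sqnorm2 (q t - qs) <= k ^+ t * sqnorm2 (q 0%N - qs).
  elim: t => [|t IH]; first by rewrite expr0 mul1r.
  rewrite he exprS -mulrA; apply: le_trans (contr _) _; exact: ler_wpM2l.
set s0 := sqnorm2 (q 0%N - qs) in hb2.
have s00 : 0 <= s0 := sq_ge0 _ _ _.
apply/cvgrPdist_le => eps eps0.
have ka : `|k| < 1 by rewrite ger0_norm.
set c := eps ^+ 2 / (s0 + 1).
have c0 : 0 < c by apply: divr_gt0; [exact: exprn_gt0 | lra].
have hs : 0 < s0 + 1 by lra.
have hc : c * (s0 + 1) = eps ^+ 2 by rewrite /c mulfVK // gt_eqF.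
have := cvg_expr ka; move/cvgrPdist_le => /(_ c c0) h.
apply: filterS h => t /= ht.
rewrite sub0r normrN ger0_norm ?exprn_ge0 // in ht.
change (mx_norm (qs - q t) <= eps).
rewrite mx_normrE; apply: bigmax_le => [|[i j] _]; first exact: ltW.
rewrite ord1 /= !mxE.
have := sq_entry _ _ (q t - qs) i; rewrite !mxE => hi.
have := hb2 t => h2.
have h3 : k ^+ t * s0 <= eps ^+ 2 by nra.
rewrite ler_norml; apply/andP; split; nra.
Qed.

Lemma X_sym (R : realType) N (par : 'I_N -> 'I_N.+1) (Z : 'I_N -> 'M[R[i]]_3) :
  (forall n, (Z n)^T = Z n) ->
  Xmat par Z + (Xmat par Z)^T = Xxmat par Z + Xxmat par Z.
Proof.
move=> HZ; rewrite /Xmat /Xxmat [(_ *: _)^T]linearZ /= -!scalerDr; congr (_ *: _).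
move: (Mmat R par) => M.
rewrite !trmx_mul trmxK !mulmxA -mulmxDl -mulmxDr (bdiag_sym _ _ _ (fun n => Xtilde (Z n))).
  by rewrite mulmxDr mulmxDl.
by move=> n; apply: Xt_sym.
Qed.

Lemma lmax0 (R : realType) (A : 'M[R]_0) : lambda_max A = 0.
Proof.
rewrite /lambda_max (_ : [set a | eigenvalue A a]%classic = set0) ?sup0 //.
apply/seteqP; split => a //=.
by rewrite /eigenvalue (flatmx0 (eigenspace A a)) eqxx.
Qed.

Theorem proposition5 (R : realType) (N : nat) (par : 'I_N -> 'I_N.+1)
  (Hpar : forall n : 'I_N, (par n < n.+1)%N)
  (Z : 'I_N -> 'M[R[i]]_3) (HZ : forall n : 'I_N, (Z n)^T = Z n)
  (p : 'cV[R]_(3 * N)) (v0 mu : R) (q : nat -> 'cV[R]_(3 * N))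
  (Hq : forall t : nat,
     q t.+1 = q t - mu *: ((Rmat par Z *m p + Xmat par Z *m q t + v0 *: const_mx 1)
                           - v0 *: const_mx 1))
  (Hmu : 0 < mu < 2 * lambda_min (Xxmat par Z)
                  / lambda_max ((Xmat par Z)^T *m Xmat par Z)) :
  exists qstar : 'cV[R]_(3 * N),
    (forall q' : 'cV[R]_(3 * N),
       (1 / 2) * sqnorm2 (Rmat par Z *m p + Xmat par Z *m qstar)
       <= (1 / 2) * sqnorm2 (Rmat par Z *m p + Xmat par Z *m q'))
    /\ (q @ \oo --> qstar)%classic.
Proof.
have HX := X_sym _ _ par _ HZ.
have Hq' t : q t.+1 = q t - mu *: (Rmat par Z *m p + Xmat par Z *m q t).
  by rewrite Hq addrK.
destruct N as [|N'].
  exfalso; move: Hmu; rewrite lmax0 invr0 mulr0 => /andP [h1 h2].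
  by move: (lt_trans h1 h2); rewrite ltxx.
have [qs [h1 h2]] := @main_gen R (3 * N'.+1).-1 _ _ _ _ _ HX Hq' Hmu.
exists qs; split => // q'.
rewrite h1 (_ : sqnorm2 0 = 0); last by rewrite /sqnorm2 big1 // => i _; rewrite mxE expr0n.
by rewrite mulr0 mulr_ge0 // sq_ge0.
Qed.
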